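(* Let $a,b,c\in\mathbb C$ satisfy $b^2=ac+1$ or $b^2=ac-1$. In the field of rational functions $\mathbb C(x_1,\ldots,x_n)$, define for $1\le i,j\le n$ $$f[x_ix_j]=\frac{x_i-x_j}{c+b(x_i+x_j)+a\,x_ix_j}.$$ Then for every even $n$, $$f[x_1x_2\ldots x_n]=\prod_{1\le i<j\le n}\frac{x_i-x_j}{c+b(x_i+x_j)+a\,x_ix_j}.$$ Special cases include $\frac{x-y}{1-xy}$ (take $a=-1$, $b=0$, $c=1$) and $\frac{x-y}{c+x+y}$ for any constant $c$ (take $a=0$, $b=1$).
   Context: Here $f[x_1\ldots x_n]$ denotes the Pfaffian $$f[x_1\ldots x_n]=\sum s(x_1\ldots x_n,y_1\ldots y_n)\,f[y_1y_2]\cdots f[y_{n-1}y_n],$$ where the sum is over all partitions of $\{x_1,\ldots,x_n\}$ into pairs $\{y_1,y_2\},\ldots,\{y_{n-1},y_n\}$. The sign $s(x_1\ldots x_n,y_1\ldots y_n)$ is the sign of the permutation taking $x_1\ldots x_n$ to $y_1\ldots y_n$, and each summand is independent of how the pairing is listed. The denominators are nonzero polynomials, since $(a,b,c)\neq(0,0,0)$. *)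

(* Defs.v *)
From HB Require Import structures.
From mathcomp Require Import all_boot all_algebra all_fingroup.
From mathcomp Require Import fraction mpoly.
From mathcomp Require Import complex.
From mathcomp Require Import Rstruct.

Set Implicit Arguments.
Unset Strict Implicit.
Unset Printing Implicit Defensive.
Import GRing.Theory.
Local Open Scope ring_scope.

Definition CC : fieldType := complex.complex Rdefinitions.R.

(* The field of rational functions C(x_1,...,x_n) (variables indexed 0..n-1). *)
Definition ratfun (n : nat) := {fraction {mpoly CC[n]}}.

(* A permutation s of 'I_n lists a partition into pairs
   {s 0, s 1}, {s 2, s 3}, ...  We select the canonical listing of each
   pairing: inside each pair the smaller element comes first, and the pairs
   are ordered by their first elements.  (For even n these permutations are
   in bijection with the partitions of {0,...,n-1} into pairs.) *)
(* i + k as an element of 'I_n (defaults to i if out of range; only used in range) *)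
Definition shiftI (n : nat) (i : 'I_n) (k : nat) : 'I_n := insubd i (i + k)%N.

Definition canonical_pairing (n : nat) (s : 'S_n) : bool :=
  [forall i : 'I_n, (~~ odd i) ==>
     ((i.+1 < n)%N ==> (s i < s (shiftI i 1))%N) &&
     ((i.+2 < n)%N ==> (s i < s (shiftI i 2))%N)].

Definition pfaffian (R : comNzRingType) (n : nat) (f : 'I_n -> 'I_n -> R) : R :=
  \sum_(s : 'S_n | canonical_pairing s)
     (-1) ^+ s * \prod_(i : 'I_n | ~~ odd i) f (s i) (s (shiftI i 1)).

Definition fpair (n : nat) (a b c : CC) (i j : 'I_n) : ratfun n :=
  tofrac ('X_i - 'X_j : {mpoly CC[n]}) /
  tofrac (c%:MP + b%:MP * ('X_i + 'X_j) + a%:MP * ('X_i * 'X_j) : {mpoly CC[n]}).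

(* Main.v *)
Require Import Defs.
From HB Require Import structures.
From mathcomp Require Import all_boot all_algebra all_fingroup.
From mathcomp Require Import fraction mpoly.
From mathcomp Require Import complex.
From mathcomp Require Import Rstruct.
Import GRing.Theory.
Local Open Scope ring_scope.

From mathcomp Require Import ring zify.

Section Alg.
Variables (K : fieldType) (a b c : K).
Definition Qf (u v : K) := c + b * (u + v) + a * (u * v).
Definition btf (u : K) := b + a * u.
Definition xif (u : K) := - (c + b * u) / btf u.
Definition eef := b ^+ 2 - a * c.
Definition Ff (u v : K) := (u - v) / Qf u v.
Definition Bf (u v : K) := Qf u v / (u - v).

Lemma QC u v : Qf u v = Qf v u.
Proof. rewrite /Qf; ring. Qed.
Lemma Qxi u v : btf u != 0 -> Qf u v = btf u * (v - xif u).
Proof. rewrite /Qf /xif /btf => h. field. exact h. Qed.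
Lemma Qxi2 u v : btf u != 0 -> Qf (xif u) v = eef * (v - u) / btf u.
Proof. rewrite /Qf /xif /eef /btf => h. field. exact h. Qed.
Lemma Qxi0 u : btf u != 0 -> Qf u (xif u) = 0.
Proof. by move=> h; rewrite Qxi // subrr mulr0. Qed.

Hypothesis hee : eef * eef = 1.

Lemma ee_neq0 : eef != 0.
Proof. by apply/eqP => h; move: hee; rewrite h mul0r => /eqP; rewrite eq_sym oner_eq0. Qed.

Lemma ee_even k : ~~ odd k -> eef ^+ k = 1.
Proof.
move=> hk; rewrite -(odd_double_half k) (negbTE hk) add0n -mul2n exprM expr2 hee.
by rewrite expr1n.
Qed.

Variables (I : finType) (z : I -> K).
Hypotheses (zinj : injective z) (Qnz : forall i j, Qf (z i) (z j) != 0)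
  (btnz : forall i, btf (z i) != 0).

Lemma zneq {i j} : i != j -> z i - z j != 0.
Proof. by move=> h; rewrite subr_eq0 (inj_eq zinj). Qed.

Lemma xi_neq i j : xif (z i) != z j.
Proof.
apply/eqP => h; have := Qnz i j; rewrite (Qxi _ _ (btnz i)) -h subrr mulr0.
by rewrite eqxx.
Qed.

Lemma xi_inj : injective (fun i => xif (z i)).
Proof.
move=> i j /= h; apply/eqP; apply: contraT => nij.
have : Qf (xif (z i)) (z j) = 0 by rewrite h QC Qxi0.
move/eqP; rewrite Qxi2 // mulf_eq0 invr_eq0 (negbTE (btnz i)) orbF.
by rewrite mulf_eq0 (negbTE ee_neq0) /= subr_eq0 (inj_eq zinj) eq_sym (negbTE nij).
Qed.

Lemma QB_xi l i : l != i -> Qf (z i) (xif (z l)) * Bf (z l) (z i) = eef * (xif (z l) - z i).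
Proof.
move=> li; rewrite QC Qxi2 // /Bf (Qxi _ _ (btnz l)).
have h1 := btnz l; have h2 := zneq li.
field. by rewrite h1 h2.
Qed.

Lemma BQ l i : l != i -> (z l - z i) * Bf (z l) (z i) = Qf (z l) (z i).
Proof. by move=> li; rewrite /Bf mulrC divfK // zneq. Qed.

Definition wf (S : {set I}) j := \prod_(i in S | i != j) Bf (z j) (z i).

Lemma prod_D1D1 (S : {set I}) j k (G : I -> K) : k \in S -> k != j ->
  \prod_(i in S | i != j) G i = G k * \prod_(i in S :\ k | i != j) G i.
Proof.
move=> kS kj; rewrite (bigD1 k) /=; last by rewrite kS kj.
congr (_ * _); apply: eq_bigl => i; rewrite in_setD1; case: (i == k); rewrite ?andbF //.
by rewrite andbT.
Qed.

Lemma prod_D1 (S : {set I}) k (G : I -> K) : k \in S ->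
  \prod_(i in S) G i = G k * \prod_(i in S | i != k) G i.
Proof. by move=> kS; rewrite (bigD1 k). Qed.

Lemma prod_setD1 (S : {set I}) k (G : I -> K) :
  \prod_(i in S :\ k) G i = \prod_(i in S | i != k) G i.
Proof. by apply: eq_bigl => i; rewrite in_setD1 andbC. Qed.

Lemma sum_setD1 (S : {set I}) k (G : I -> K) :
  \sum_(i in S :\ k) G i = \sum_(i in S | i != k) G i.
Proof. by apply: eq_bigl => i; rewrite in_setD1 andbC. Qed.

Lemma card_predD1 (S : {set I}) j : j \in S -> #|[pred i in S | i != j]| = (#|S|).-1.
Proof.
move=> jS; rewrite (cardD1 j S) jS /=; apply: eq_card => i; rewrite !inE andbC //.
Qed.

Arguments prod_D1D1 {S j k G}.
Arguments prod_D1 {S k G}.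
Definition Qpf i : {poly K} := (btf (z i))%:P * ('X - (xif (z i))%:P).

Lemma QpE i t : (Qpf i).[t] = Qf (z i) t.
Proof. by rewrite /Qpf hornerM hornerC hornerXsubC -Qxi. Qed.

Lemma size_Qp i : (size (Qpf i) <= 2)%N.
Proof.
apply: leq_trans (size_polyMleq _ _) _; rewrite size_XsubC.
by have := size_polyC_leq1 (btf (z i)); lia.
Qed.

Lemma size_prod_lin (P : pred I) (L : I -> {poly K}) :
  (forall i, size (L i) <= 2)%N -> (size (\prod_(i | P i) L i)%R <= #|P|.+1)%N.
Proof.
move=> hL; apply: leq_trans (size_poly_prod_leq _ _) _.
have : (\sum_(i | P i) size (L i) <= \sum_(i | P i) 2)%N by apply: leq_sum => i _; exact: (hL i).
rewrite sum_nat_const; lia.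
Qed.

Lemma size_XsubC2 (t : K) : (size ('X - t%:P : {poly K})%R <= 2)%N.
Proof. by rewrite size_XsubC. Qed.


Lemma BA u v : Bf u v = - Bf v u.
Proof. by rewrite /Bf QC -[u - v]opprB invrN mulrN. Qed.

Lemma E_sum m : forall S : {set I}, (#|S| < m)%N -> ~~ odd #|S| ->
  \sum_(j in S) wf S j = 0.
Proof.
elim: m => [S //|m IH S hm hS].
case: (set_0Vmem S) => [-> | [j0 j0S]]; first by rewrite big_set0.
set S' := S :\ j0.
have cS : #|S| = (#|S'|).+1 by rewrite (cardsD1 j0 S) j0S.
case: (set_0Vmem S') => [S'0 | [j1 j1S']].
  by move: hS; rewrite cS S'0 cards0.
set S'' := S' :\ j1.
have cS' : #|S'| = (#|S''|).+1 by rewrite (cardsD1 j1 S') j1S'.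
have IH'' : \sum_(j in S'') wf S'' j = 0.
  apply: IH; first by move: hm; rewrite cS cS'; lia.
  by move: hS; rewrite cS cS' /= negbK.
have j1j0 : j1 != j0 by move: j1S'; rewrite in_setD1 => /andP[].
have j1S : j1 \in S by move: j1S'; rewrite in_setD1 => /andP[].
pose P : {poly K} := \prod_(i in S') Qpf i -
  \sum_(j in S') Qpf j * \prod_(i in S' | i != j) ('X - (z i)%:P) * (wf S' j)%:P.
have PE t : P.[t] = \prod_(i in S') Qf (z i) t -
   \sum_(j in S') Qf (z j) t * \prod_(i in S' | i != j) (t - z i) * wf S' j.
  rewrite /P hornerD hornerN.
  congr (_ - _). rewrite horner_prod; apply: eq_bigr => i _; exact: QpE.
  rewrite horner_sum; apply: eq_bigr => j _; rewrite hornerM hornerC hornerM QpE horner_prod.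
  by congr (_ * _ * _); apply: eq_bigr => i _; rewrite hornerXsubC.
have P0 : P = 0.
  apply: (@roots_geq_poly_eq0 _ _ (xif (z j1) :: [seq z i | i <- enum S'])).
  - rewrite /=; apply/andP; split.
      rewrite /root PE (prod_D1 j1S') Qxi0 // mul0r sub0r oppr_eq0.
      rewrite (bigD1 j1 j1S') /= Qxi0 // !mul0r add0r.
      rewrite -sum_setD1 -/S''.
      set t := xif (z j1).
      have -> : \sum_(j in S'') Qf (z j) t * \prod_(i in S' | i != j) (t - z i) * wf S' j =
          \sum_(j in S'') (- (eef * (t - z j1) * \prod_(i in S'') (t - z i))) * wf S'' j.
        apply: eq_bigr => j jS''.
        have jj1 : j != j1 by move: jS''; rewrite in_setD1 => /andP[].
        have jS' : j \in S' by move: jS''; rewrite in_setD1 => /andP[].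
        have j1j : j1 != j by rewrite eq_sym.
        have hq := QB_xi _ _ j1j.
        rewrite (prod_D1D1 j1S' j1j) /wf (prod_D1D1 j1S' j1j) -/S'' (prod_D1 jS'') (BA (z j)).
        rewrite -/t in hq.
        transitivity (- (Qf (z j) t * Bf (z j1) (z j)) * ((t - z j1) * \prod_(i in S'' | i != j) (t - z i)) * \prod_(i in S'' | i != j) Bf (z j) (z i)); first ring.
        rewrite hq; ring.
      by rewrite -big_distrr /= IH'' mulr0.
    apply/allP => _ /mapP [l lS' ->]; rewrite mem_enum in lS'.
    rewrite /root PE (prod_D1 lS') (bigD1 l lS') /=.
    have rest : \sum_(j in S' | j != l)
        Qf (z j) (z l) * \prod_(i in S' | i != j) (z l - z i) * wf S' j = 0.
      apply: big1 => j /andP [jS' jl].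
      have lj : l != j by rewrite eq_sym.
      by rewrite (prod_D1D1 lS' lj) subrr mul0r mulr0 mul0r.
    rewrite rest addr0 -[_ * _ * wf S' l]mulrA.
    have -> : \prod_(i in S' | i != l) (z l - z i) * wf S' l =
        \prod_(i in S' | i != l) Qf (z i) (z l).
      rewrite /wf -big_split; apply: eq_bigr => i /andP[_ il].
      by rewrite /= BQ; [exact: QC | rewrite eq_sym].
    by rewrite subrr.
  - rewrite /= map_inj_uniq // enum_uniq andbT; apply/mapP => [[i _ h]].
    by move: (xi_neq j1 i); rewrite h eqxx.
  - rewrite /= size_map -cardE.
    apply: leq_trans (size_polyD _ _) _; rewrite size_polyN geq_max; apply/andP; split.
      exact: (size_prod_lin _ _ size_Qp).
    apply: leq_trans (size_sum _ _ _) _; apply/bigmax_leqP => j jS'.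
    apply: leq_trans (size_polyMleq _ _) _.
    have h1 := size_polyC_leq1 (wf S' j).
    have h2 : (size (Qpf j * \prod_(i in S' | i != j) ('X - (z i)%:P))%R <= #|S'|.+1)%N.
      apply: leq_trans (size_polyMleq _ _) _.
      have h0 : (0 < #|S'|)%N by apply/card_gt0P; exists j.
      rewrite -subn1.
      apply: leq_trans (leq_sub2r 1 (leq_add (size_Qp j) (size_prod_lin [pred i in S' | i != j] (fun i => 'X - (z i)%:P) (fun i => size_XsubC2 (z i))))) _.
      rewrite card_predD1 // prednK //; lia.
    rewrite -subn1.
    apply: leq_trans (leq_sub2r 1 (leq_add h2 h1)) _; lia.
have key : P.[z j0] = (\prod_(i in S') (z j0 - z i)) * \sum_(j in S) wf S j.
  rewrite PE (big_setD1 j0 j0S) /= -/S' mulrDr.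
  congr (_ + _).
    rewrite /wf -prod_setD1 -/S' -big_split; apply: eq_bigr => i iS'.
    have ij0 : i != j0 by move: iS'; rewrite in_setD1 => /andP[].
    by rewrite /= BQ; [exact: QC | rewrite eq_sym].
  rewrite mulr_sumr -sumrN; apply: eq_bigr => j jS'.
  have jj0 : j != j0 by move: jS'; rewrite in_setD1 => /andP[].
  have j0j : j0 != j by rewrite eq_sym.
  rewrite (prod_D1 jS') /wf (prod_D1D1 j0S j0j) -/S' -(BQ _ _ jj0).
  ring.
have D0 : \prod_(i in S') (z j0 - z i) != 0.
  apply/prodf_neq0 => i iS'.
  have ij0 : i != j0 by move: iS'; rewrite in_setD1 => /andP[].
  by apply: zneq; rewrite eq_sym.
move: key; rewrite P0 horner0 => /esym /eqP; rewrite mulf_eq0 (negbTE D0) /=.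
by move/eqP.
Qed.

Lemma O_sum (S : {set I}) (u : K) : odd #|S| -> (forall i, u != z i) ->
  (forall i, Qf u (z i) != 0) ->
  \sum_(j in S) wf S j * Ff u (z j) = \prod_(i in S) Ff u (z i).
Proof.
move=> ho uz Qu.
case: (set_0Vmem S) => [S0|[j0 j0S]]; first by move: ho; rewrite S0 cards0.
set S' := S :\ j0.
have cS : #|S| = (#|S'|).+1 by rewrite (cardsD1 j0 S) j0S.
have E' : \sum_(j in S') wf S' j = 0.
  by apply: (@E_sum (#|S'|.+1)) => //; move: ho; rewrite cS /=; case: odd.
pose P : {poly K} := \sum_(j in S) ('X - (z j)%:P) * \prod_(i in S | i != j) Qpf i * (wf S j)%:P
   - \prod_(i in S) ('X - (z i)%:P).
have PE t : P.[t] = \sum_(j in S) (t - z j) * \prod_(i in S | i != j) Qf (z i) t * wf S j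
   - \prod_(i in S) (t - z i).
  rewrite /P hornerD hornerN.
  congr (_ - _); last by rewrite horner_prod; apply: eq_bigr => i _; exact: hornerXsubC.
  rewrite horner_sum; apply: eq_bigr => j _; rewrite hornerM hornerC hornerM hornerXsubC horner_prod.
  by congr (_ * _ * _); apply: eq_bigr => i _; exact: QpE.
have P0 : P = 0.
  apply: (@roots_geq_poly_eq0 _ _ (z j0 :: [seq xif (z i) | i <- enum S])).
  - rewrite /=; apply/andP; split.
      rewrite /root PE (prod_D1 j0S) subrr mul0r subr0.
      rewrite (bigD1 j0 j0S) /= subrr !mul0r add0r -sum_setD1 -/S'.
      have -> : \sum_(j in S') (z j0 - z j) * \prod_(i in S | i != j) Qf (z i) (z j0) * wf S j =
          \sum_(j in S') (- (Qf (z j0) (z j0) * \prod_(i in S') Qf (z i) (z j0))) * wf S' j.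
        apply: eq_bigr => j jS'.
        have jj0 : j != j0 by move: jS'; rewrite in_setD1 => /andP[].
        have j0j : j0 != j by rewrite eq_sym.
        rewrite (prod_D1D1 j0S j0j) /wf (prod_D1D1 j0S j0j) -/S' (prod_D1 jS').
        rewrite -(BQ _ _ jj0); ring.
      by rewrite -big_distrr /= E' mulr0.
    apply/allP => _ /mapP [l lS ->]; rewrite mem_enum in lS.
    set t := xif (z l).
    rewrite /root PE (bigD1 l lS) /=.
    have rest : \sum_(j in S | j != l) (t - z j) * \prod_(i in S | i != j) Qf (z i) t * wf S j = 0.
      apply: big1 => j /andP [jS jl].
      have lj : l != j by rewrite eq_sym.
      by rewrite (prod_D1D1 lS lj) /t Qxi0 // mul0r mulr0 mul0r.
    rewrite rest addr0 (prod_D1 lS) -[_ * _ * wf S l]mulrA.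
    have -> : \prod_(i in S | i != l) Qf (z i) t * wf S l = \prod_(i in S | i != l) (t - z i).
      rewrite /wf -big_split /=.
      rewrite (eq_bigr (fun i => eef * (t - z i))); last first.
        by move=> i /andP[_ il]; rewrite /t QB_xi // eq_sym.
      rewrite big_split /= prodr_const.
      have -> : #|(fun i : I => (i \in S) && (i != l))| = #|S'|.
        by rewrite (card_predD1 _ _ lS) cS.
      rewrite ee_even ?mul1r //; move: ho; rewrite cS /=; by case: odd.
    by rewrite subrr.
  - rewrite /= map_inj_uniq ?enum_uniq ?andbT; last exact: xi_inj.
    apply/mapP => [[i _ h]].
    by move: (xi_neq i j0); rewrite -h eqxx.
  - rewrite /= size_map -cardE.
    apply: leq_trans (size_polyD _ _) _; rewrite size_polyN geq_max; apply/andP; split; last first.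
      apply: leq_trans (size_prod_lin (fun i => i \in S) _ (fun i => size_XsubC2 (z i))) _.
      by [].
    apply: leq_trans (size_sum _ _ _) _; apply/bigmax_leqP => j jS.
    apply: leq_trans (size_polyMleq _ _) _.
    have h1 := size_polyC_leq1 (wf S j).
    have h2 : (size (('X - (z j)%:P) * \prod_(i in S | i != j) Qpf i)%R <= #|S|.+1)%N.
      apply: leq_trans (size_polyMleq _ _) _.
      rewrite -subn1.
      apply: leq_trans (leq_sub2r 1 (leq_add (size_XsubC2 (z j)) (size_prod_lin [pred i in S | i != j] _ size_Qp))) _.
      rewrite card_predD1 // cS /=; lia.
    rewrite -subn1.
    apply: leq_trans (leq_sub2r 1 (leq_add h2 h1)) _; lia.
have DQ0 : \prod_(i in S) Qf u (z i) != 0 by apply/prodf_neq0 => i _.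
apply: (mulIf DQ0).
rewrite -big_split /=.
rewrite [RHS](eq_bigr (fun i => u - z i)); last first.
  by move=> i _; rewrite /Ff divfK.
have := PE u; rewrite P0 horner0 => /esym /eqP; rewrite subr_eq0 => /eqP <-.
rewrite mulr_suml; apply: eq_bigr => j jS.
rewrite (prod_D1 jS).
have hF : Ff u (z j) * Qf u (z j) = u - z j by rewrite /Ff divfK.
transitivity (wf S j * (Ff u (z j) * Qf u (z j)) * \prod_(i in S | i != j) Qf u (z i)); first ring.
rewrite hF (eq_bigr (fun i => Qf (z i) u)); last by move=> i _; rewrite QC.
ring.
Qed.
End Alg.
Set Implicit Arguments.
Unset Strict Implicit.
Unset Printing Implicit Defensive.
Lemma val_shiftI n (i : 'I_n) k : nat_of_ord (shiftI i k) = if (i + k < n)%N then (i + k)%N else nat_of_ord i.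
Proof. by rewrite /shiftI val_insubd. Qed.

Lemma val_shiftI_lt n (i : 'I_n) k : (i + k < n)%N -> nat_of_ord (shiftI i k) = (i + k)%N.
Proof. by move=> h; rewrite val_shiftI h. Qed.

Lemma shiftI_lift0 n (k : 'I_n) m :
  shiftI (lift ord0 k) m = lift ord0 (shiftI k m) :> 'I_n.+1.
Proof.
apply: val_inj => /=; rewrite val_shiftI !lift0 val_shiftI addSn ltnS.
by case: ifP.
Qed.

Lemma ltn_lift n (h : 'I_n.+1) (x y : 'I_n) : (lift h x < lift h y)%N = (x < y)%N.
Proof. rewrite /= /bump; case: (leqP h x) => hx; case: (leqP h y) => hy /=; apply/idP/idP; lia. Qed.

Definition condp n (s : 'S_n) (i : 'I_n) : bool :=
  (~~ odd i) ==>
     ((i.+1 < n)%N ==> (s i < s (shiftI i 1))%N) &&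
     ((i.+2 < n)%N ==> (s i < s (shiftI i 2))%N).

Lemma canonical_cond n (s : 'S_n) : canonical_pairing s = [forall i, condp s i].
Proof. by []. Qed.

Lemma canonical_first n (s : 'S_n.+1) : canonical_pairing s -> s ord0 = ord0.
Proof.
move=> /forallP hc.
have H : forall m (q : 'I_n.+1), val q = m -> (s ord0 <= s q)%N.
  elim/ltn_ind=> m IH q qm.
  case: m IH qm => [|m] IH qm.
    by rewrite (_ : q = ord0) //; apply: val_inj.
  pose r := if odd m then m.-1 else m.
  pose d := if odd m then 2%N else 1%N.
  have rd : (r + d = m.+1)%N.
    by rewrite /r /d; case: ifP => hm; [have := odd_gt0 hm; lia | lia].
  have rlt : (r < n.+1)%N by have := ltn_ord q; rewrite qm; lia.
  have re : ~~ odd r.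
    by rewrite /r; case: ifP => hm; [move: hm; case: (m) => //= m'; rewrite negbK | rewrite hm].
  pose ro := Ordinal rlt.
  have h0 : (s ord0 <= s ro)%N by apply: (IH r) => //; rewrite /r; case: ifP => _; rewrite ltnS ?leq_pred.
  have hq : shiftI ro d = q by apply: val_inj => /=; rewrite val_shiftI /= rd qm ifT //; rewrite -qm ltn_ord.
  have := hc ro; rewrite /= re /= => /andP [h1 h2].
  have hdq : (r + d < n.+1)%N by rewrite rd -qm ltn_ord.
  have : (s ro < s (shiftI ro d))%N.
    move: h1 h2 hdq; rewrite /d; case: ifP => _ h1 h2 hdq.
      by apply: (implyP h2); rewrite -addn2.
    by apply: (implyP h1); rewrite -addn1.
  rewrite hq; lia.
have := H _ ((s^-1)%g ord0) (erefl _); rewrite permKV => h.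
by apply: val_inj => /=; move: h; rewrite leqn0 => /eqP.
Qed.

Section BigS.
Variables (n : nat) (j : 'I_n.+1) (t : 'S_n).
Definition bigS : 'S_n.+2 := lift_perm ord0 ord0 (lift_perm ord0 j t).
Lemma bigS0 : bigS ord0 = ord0.
Proof. exact: lift_perm_id. Qed.
Lemma bigS1 : bigS (lift ord0 ord0) = lift ord0 j.
Proof. by rewrite /bigS lift_perm_lift lift_perm_id. Qed.
Lemma bigS2 k : bigS (lift ord0 (lift ord0 k)) = lift ord0 (lift j (t k)).
Proof. by rewrite /bigS !lift_perm_lift. Qed.

Lemma condS k : condp bigS (lift ord0 (lift ord0 k)) = condp t k.
Proof.
rewrite /condp !shiftI_lift0 !bigS2 !ltn_lift !lift0 /= negbK !ltnS //.
Qed.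

Lemma bigS_pos x : x != ord0 -> (0 < bigS x)%N.
Proof.
move=> hx; rewrite lt0n; apply: contra hx => /eqP h; apply/eqP.
apply: (@perm_inj _ bigS); rewrite bigS0; apply: val_inj; exact: h.
Qed.

Lemma canonical_bigS : canonical_pairing bigS = canonical_pairing t.
Proof.
rewrite !canonical_cond; apply/forallP/forallP => H k.
  by rewrite -condS; apply: H.
case: (unliftP ord0 k) => [k'|] ->.
  case: (unliftP ord0 k') => [k''|] ->; first by rewrite condS.
  by rewrite /condp lift0.
rewrite /condp bigS0; apply/implyP => _; apply/andP; split; apply/implyP => h; apply: bigS_pos;
  apply/eqP => e; move: (congr1 (@nat_of_ord n.+2) e); rewrite val_shiftI_lt; lia.
Qed.

Lemma odd_bigS : odd_perm bigS = odd j (+) odd_perm t.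
Proof. by rewrite /bigS !odd_lift_perm /=. Qed.

Lemma prod_bigS (R : comNzRingType) (f : 'I_n.+2 -> 'I_n.+2 -> R) :
  \prod_(i : 'I_n.+2 | ~~ odd i) f (bigS i) (bigS (shiftI i 1)) =
  f ord0 (lift ord0 j) *
  \prod_(k : 'I_n | ~~ odd k) f (lift ord0 (lift j (t k))) (lift ord0 (lift j (t (shiftI k 1)))).
Proof.
rewrite big_mkcond [X in _ = _ * X]big_mkcond !big_ord_recl /=.
have -> : shiftI (@ord0 n.+1) 1 = lift ord0 ord0 by apply: val_inj => /=; rewrite val_shiftI.
rewrite bigS0 bigS1 mul1r; congr (_ * _); apply: eq_bigr => k _.
by rewrite !shiftI_lift0 !bigS2 add0n negbK.
Qed.
End BigS.

Lemma sum_lift_perm (R : nmodType) n (i0 j0 : 'I_n.+1) (P : pred 'S_n.+1)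
    (G : 'S_n.+1 -> R) :
  \sum_(s : 'S_n.+1 | (s i0 == j0) && P s) G s =
  \sum_(t : 'S_n | P (lift_perm i0 j0 t)) G (lift_perm i0 j0 t).
Proof.
rewrite (reindex (lift_perm i0 j0)); last first.
  pose ulsf i (s : 'S_n.+1) k := odflt k (unlift (s i) (s (lift i k))).
  have ulsfK i (s : 'S_n.+1) k: lift (s i) (ulsf i s k) = s (lift i k).
    rewrite /ulsf; have:= neq_lift i k.
    by rewrite -(can_eq (permK s)) => /unlift_some[] ? ? ->.
  have inj_ulsf: injective (ulsf i0 _).
    move=> s; apply: can_inj (ulsf (s i0) s^-1%g) _ => k'.
    by rewrite {1}/ulsf ulsfK !permK liftK.
  exists (fun s => perm (inj_ulsf s)) => [s _ | s /andP[/eqP si0 _]].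
    by apply/permP=> k'; rewrite permE /ulsf lift_perm_lift lift_perm_id liftK.
  apply/permP=> k.
  case: (unliftP i0 k) => [k'|] ->; rewrite ?lift_perm_id //.
  by rewrite lift_perm_lift -si0 permE ulsfK.
by apply: eq_bigl => t; rewrite lift_perm_id eqxx.
Qed.

Lemma pf_expand (R : comNzRingType) n (f : 'I_n.+2 -> 'I_n.+2 -> R) :
  pfaffian f = \sum_(j < n.+1) (-1) ^+ j * f ord0 (lift ord0 j) *
     pfaffian (fun k l : 'I_n => f (lift ord0 (lift j k)) (lift ord0 (lift j l))).
Proof.
rewrite /pfaffian.
rewrite (eq_bigl (fun s : 'S_n.+2 => (s ord0 == ord0) && canonical_pairing s)); last first.
  by move=> s; case h: (canonical_pairing s); rewrite ?andbF // canonical_first // eqxx.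
rewrite sum_lift_perm.
rewrite (partition_big (fun u : 'S_n.+1 => u ord0) predT) //=.
apply: eq_bigr => j _.
rewrite (eq_bigl (fun u : 'S_n.+1 => (u ord0 == j) && canonical_pairing (lift_perm ord0 ord0 u))); last by move=> u; rewrite andbC.
rewrite sum_lift_perm big_distrr /=.
apply: eq_big => [t | t _]; first exact: canonical_bigS.
have := prod_bigS j t f; rewrite /bigS => ->.
have := odd_bigS j t; rewrite /bigS => ->.
rewrite signr_addb -[(-1) ^+ (nat_of_ord j)]signr_odd.
rewrite !mulrA; congr (_ * _); rewrite -!mulrA; congr (_ * _); exact: mulrC.
Qed.

Section Main.
Variables (K : fieldType) (a b c : K).
Hypothesis hee : eef K a b c * eef K a b c = 1.
Local Notation QQ := (Qf K a b c).
Local Notation FF := (Ff K a b c).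
Local Notation BB := (Bf K a b c).
Local Notation btt := (btf K a b).

Definition good n (x : 'I_n -> K) :=
  [/\ injective x, (forall i j, QQ (x i) (x j) != 0) & (forall i, btt (x i) != 0)].

Lemma good_comp n m (x : 'I_n -> K) (h : 'I_m -> 'I_n) :
  injective h -> good x -> good (fun i => x (h i)).
Proof.
move=> hi [xi Qx bx]; split => //.
by move=> i j /xi /hi.
Qed.

Lemma FA u v : FF u v = - FF v u.
Proof. by rewrite /Ff (QC K a b c u v) -[v - u]opprB mulNr opprK. Qed.

Lemma FB u v : u != v -> QQ u v != 0 -> FF u v * BB u v = 1.
Proof.
move=> h1 h2; rewrite /Ff /Bf mulrA divfK // divff //.
by rewrite subr_eq0.
Qed.

Lemma sign_count m (j : 'I_m.+1) :
  \prod_(k < m) (if (lift j k < j)%N then -1 else 1) = (-1) ^+ j :> K.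
Proof.
rewrite (eq_bigr (fun k : 'I_m => if (k < j)%N then -1 else 1)); last first.
  move=> k _; congr (if _ then _ else _); rewrite /= /bump.
  by case: (leqP j k) => h /=; apply/idP/idP; lia.
rewrite -(big_mkord xpredT (fun k => if (k < j)%N then -1 else 1)).
have hj : (j <= m)%N by rewrite -ltnS.
rewrite (big_cat_nat (leq0n j) hj) /=.
rewrite (@eq_big_nat _ _ _ 0 j _ (fun _ => -1)); last by move=> k /andP[_ ->].
rewrite (@eq_big_nat _ _ _ j m _ (fun _ => 1)); last first.
  by move=> k /andP[hk _]; rewrite ltnNge hk.
by rewrite !prodr_const_nat expr1n mulr1 subn0.
Qed.

Lemma prod_lift_ne m (j : 'I_m.+1) (h : 'I_m.+1 -> K) :
  \prod_(i | i != j) h i = \prod_(k < m) h (lift j k).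
Proof.
rewrite big_mkcond (bigD1_ord j) //= eqxx /= mul1r.
by apply: eq_bigr => k _; rewrite lift_eqF.
Qed.

Lemma split_prod m (g : 'I_m.+1 -> 'I_m.+1 -> K) (j : 'I_m.+1) :
  \prod_(i < m.+1) \prod_(l < m.+1 | (i < l)%N) g i l =
  (\prod_(k < m) \prod_(l < m | (k < l)%N) g (lift j k) (lift j l)) *
  \prod_(k < m) (if (lift j k < j)%N then g (lift j k) j else g j (lift j k)).
Proof.
rewrite (bigD1_ord j) //=.
have inner k : \prod_(l < m.+1 | (lift j k < l)%N) g (lift j k) l =
    (if (lift j k < j)%N then g (lift j k) j else 1) *
    \prod_(l < m | (k < l)%N) g (lift j k) (lift j l).
  rewrite big_mkcond (bigD1_ord j) //=; congr (_ * _).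
  by rewrite [RHS]big_mkcond; apply: eq_bigr => l _; rewrite ltn_lift.
have first : \prod_(l < m.+1 | (j < l)%N) g j l =
    \prod_(k < m) (if (j < lift j k)%N then g j (lift j k) else 1).
  by rewrite big_mkcond (bigD1_ord j) //= ltnn mul1r.
rewrite first (eq_bigr _ (fun k _ => inner k)) big_split /= mulrA mulrC.
congr (_ * _); rewrite -big_split; apply: eq_bigr => k _ /=.
case: (ltngtP (lift j k) j) => h; rewrite ?mul1r ?mulr1 //.
by move: (neq_lift j k); rewrite eq_sym => /eqP []; apply: val_inj.
Qed.

Theorem pf_prod n : ~~ odd n -> forall x : 'I_n -> K, good x ->
  pfaffian (fun i j => FF (x i) (x j)) =
  \prod_(i < n) \prod_(j < n | (i < j)%N) FF (x i) (x j).
Proof.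
have [m] := ubnP n; elim: m n => // m IH [|[|n]] hm hn x gx.
- rewrite big_ord0 /pfaffian (big_pred1 1%g).
    by rewrite odd_perm1 expr0 mul1r big_pred0 // => i; case: i.
  move=> s; have -> : s = 1%g by apply/permP => [[]].
  by rewrite /pred1 /= eqxx; apply/forallP => [[]].
- by move: hn.
have [xinj Qx bx] := gx.
rewrite pf_expand.
set z := fun i : 'I_n.+1 => x (lift ord0 i).
set u := x ord0.
have gz : good z by apply: good_comp => //; exact: lift_inj.
have [zinj Qz bz] := gz.
have IHj (j : 'I_n.+1) :
  pfaffian (fun k l : 'I_n => FF (x (lift ord0 (lift j k))) (x (lift ord0 (lift j l)))) =
  \prod_(k < n) \prod_(l < n | (k < l)%N) FF (z (lift j k)) (z (lift j l)).
  apply: (IH n); first by lia.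
    by move: hn => /=; rewrite negbK.
  apply: (good_comp (x := z)) => //; exact: lift_inj.
set P' := \prod_(i < n.+1) \prod_(l < n.+1 | (i < l)%N) FF (z i) (z l).
have RHS : \prod_(i < n.+2) \prod_(l < n.+2 | (i < l)%N) FF (x i) (x l) =
    (\prod_(l < n.+1) FF u (z l)) * P'.
  rewrite big_ord_recl; congr (_ * _).
    rewrite big_mkcond [LHS]big_ord_recl /= mul1r; apply: eq_bigr => l _.
    by [].
  apply: eq_bigr => i _; rewrite big_mkcond [LHS]big_ord_recl /= mul1r [RHS]big_mkcond.
  by apply: eq_bigr => l _; rewrite /bump /= !add1n ltnS.
have Pj_eq (j : 'I_n.+1) :
    (-1) ^+ j * \prod_(k < n) \prod_(l < n | (k < l)%N) FF (z (lift j k)) (z (lift j l)) =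
    P' * wf K a b c _ z setT j.
  rewrite /P' (split_prod (fun i l => FF (z i) (z l)) j).
  have G_eq : \prod_(k < n) (if (lift j k < j)%N then FF (z (lift j k)) (z j) else FF (z j) (z (lift j k)))
      = (-1) ^+ j * \prod_(k < n) FF (z j) (z (lift j k)).
    rewrite -sign_count -big_split /=; apply: eq_bigr => k _.
    by case: ifP => _; rewrite ?mulN1r ?mul1r // FA.
  rewrite G_eq /wf.
  rewrite (eq_bigl (fun i => i != j)); last by move=> i; rewrite in_setT.
  rewrite prod_lift_ne.
  have FB1 : \prod_(k < n) FF (z j) (z (lift j k)) * \prod_(k < n) BB (z j) (z (lift j k)) = 1.
    rewrite -big_split /=; apply: big1 => k _; apply: FB => //.
    by rewrite (inj_eq zinj) neq_lift.
  set A := \prod_(k < n) FF (z j) (z (lift j k)).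
  set Bp := \prod_(k < n) BB (z j) (z (lift j k)).
  set Pj := \prod_(k < n) _.
  transitivity ((-1) ^+ j * Pj * (A * Bp)); first by rewrite FB1 mulr1.
  ring.
rewrite RHS.
transitivity (\sum_(j < n.+1) FF u (z j) * ((-1) ^+ j *
    \prod_(k < n) \prod_(l < n | (k < l)%N) FF (z (lift j k)) (z (lift j l)))).
  by apply: eq_bigr => j _; rewrite (IHj j); ring.
rewrite [LHS](eq_bigr (fun j => FF u (z j) * (P' * wf K a b c _ z setT j))); last by move=> j _; rewrite Pj_eq.
have ho : odd #|[set: 'I_n.+1]| by move: hn; rewrite cardsT card_ord /= negbK.
have uz i : u != z i by rewrite (inj_eq xinj) neq_lift.
have := @O_sum K a b c hee _ z zinj Qz bz setT u ho uz (fun i => Qx ord0 (lift ord0 i)).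
rewrite (eq_bigl xpredT); last by move=> i; rewrite in_setT.
rewrite [X in X = _ -> _](eq_bigl xpredT); last by move=> i; rewrite in_setT.
move=> <-; rewrite mulrC mulr_sumr; apply: eq_bigr => j _; ring.
Qed.
End Main.

Lemma pfaffian_ext (R : comNzRingType) n (f g : 'I_n -> 'I_n -> R) :
  (forall i j, f i j = g i j) -> pfaffian f = pfaffian g.
Proof.
move=> h; rewrite /pfaffian; apply: eq_bigr => s _; congr (_ * _).
by apply: eq_bigr => i _; exact: h.
Qed.

Lemma mpoly_neq0_eval n (p : {mpoly CC[n]}) (v : 'I_n -> CC) : meval v p != 0 -> p != 0.
Proof. by move=> h; apply: contraNneq h => ->; rewrite raddf0. Qed.

Lemma quad_nz (a b c : CC) : (b ^+ 2 = a * c + 1 \/ b ^+ 2 = a * c - 1) ->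
  exists t : CC, c + b * (t + t) + a * (t * t) != 0.
Proof.
move=> hb.
have [c0|c0] := eqVneq c 0; last by exists 0; rewrite add0r !mulr0 !addr0.
have [h1|h1] := eqVneq (c + b * (1 + 1) + a * (1 * 1)) 0; last by exists 1.
have [h2|h2] := eqVneq (c + b * (-1 + -1) + a * (-1 * -1)) 0; last by exists (-1).
exfalso.
have b4 : b * 4%:R = 0.
  transitivity ((c + b * (1 + 1) + a * (1 * 1)) - (c + b * (-1 + -1) + a * (-1 * -1))).
    ring.
  by rewrite h1 h2 subrr.
move/eqP: b4; rewrite mulf_eq0 Num.Theory.pnatr_eq0 orbF => /eqP b0.
case: hb => /eqP; rewrite b0 c0 expr0n /= mulr0 ?add0r ?sub0r eq_sym ?oppr_eq0 oner_eq0 //.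
Qed.

Lemma lin_nz (a b c : CC) : (b ^+ 2 = a * c + 1 \/ b ^+ 2 = a * c - 1) ->
  exists t : CC, b + a * t != 0.
Proof.
move=> hb.
have [b0|b0] := eqVneq b 0; last by exists 0; rewrite mulr0 addr0.
have [h1|h1] := eqVneq (b + a * 1) 0; last by exists 1.
exfalso; move: h1; rewrite b0 add0r mulr1 => a0.
case: hb => /eqP; rewrite b0 a0 expr0n /= mul0r ?add0r ?sub0r eq_sym ?oppr_eq0 oner_eq0 //.
Qed.

Theorem mainTheorem11 (a b c : CC) (n : nat) :
  (b ^+ 2 = a * c + 1 \/ b ^+ 2 = a * c - 1) ->
  ~~ odd n ->
  pfaffian (fpair a b c) =
  \prod_(i < n) \prod_(j < n | (i < j)%N) fpair a b c i j.
Proof.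
move=> hb hn.
pose phi (y : CC) : ratfun n := tofrac (y%:MP : {mpoly CC[n]}).
pose x (i : 'I_n) : ratfun n := tofrac ('X_i : {mpoly CC[n]}).
have E i j : fpair a b c i j = Ff _ (phi a) (phi b) (phi c) (x i) (x j).
  by rewrite /fpair /Ff /Qf /phi /x rmorphB !rmorphD !rmorphM rmorphD.
rewrite (pfaffian_ext E).
rewrite [RHS](eq_bigr (fun i : 'I_n => \prod_(j < n | (i < j)%N) Ff _ (phi a) (phi b) (phi c) (x i) (x j)));
  last by move=> i _; apply: eq_bigr => j _; exact: E.
apply: pf_prod => //.
- have ephi : eef _ (phi a) (phi b) (phi c) = phi (b ^+ 2 - a * c).
    by rewrite /eef /phi !rmorphB !rmorphXn !rmorphM.
  have e1 : (b ^+ 2 - a * c) * (b ^+ 2 - a * c) = 1 by case: hb => ->; ring.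
  by rewrite ephi /phi -rmorphM -rmorphM e1 !rmorph1.
split.
- move=> i j /eqP; rewrite /x tofrac_eq => /eqP h.
  have := congr1 (meval (fun k => ((k == i)%:R : CC))) h.
  rewrite !mevalXU eqxx.
  case: (j =P i) => [-> //|_] /eqP; rewrite oner_eq0 //.
- move=> i j.
  have -> : Qf _ (phi a) (phi b) (phi c) (x i) (x j) =
      tofrac (c%:MP + b%:MP * ('X_i + 'X_j) + a%:MP * ('X_i * 'X_j) : {mpoly CC[n]}).
    by rewrite /Qf /phi /x !rmorphD !rmorphM rmorphD.
  rewrite tofrac_eq0; have [t ht] := quad_nz hb.
  apply: (@mpoly_neq0_eval _ _ (fun _ => t)).
  by rewrite !(rmorphD, rmorphM) /= !mevalC !mevalXU.
- move=> i.
  have -> : btf _ (phi a) (phi b) (x i) = tofrac (b%:MP + a%:MP * 'X_i : {mpoly CC[n]}).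
    by rewrite /btf /phi /x !rmorphD !rmorphM.
  rewrite tofrac_eq0; have [t ht] := lin_nz hb.
  apply: (@mpoly_neq0_eval _ _ (fun _ => t)).
  by rewrite !(rmorphD, rmorphM) /= !mevalC !mevalXU.
Qed.
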